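(* For every positive integer $m$ one has $\mathcal C_m\subseteq \mathcal C_{m+1}$. Moreover, every odd integer $k\ge 3$ belongs to $\mathcal C_{u}$ where $u=\lceil \log_2 k\rceil$; consequently the set of all odd positive integers equals $\bigcup_{m\ge1}\mathcal C_m$.
   Context: For a positive integer $m$, $\mathcal C_m$ is the set of odd positive integers $k$ for which there exist integers $0\le j_1<j_2<\cdots<j_m\le m+k-2$ such that $2^{k+m}-1\equiv \sum_{i=1}^m 2^{j_i}\pmod k$. *)

(* Defs.v *)
From mathcomp Require Import all_boot.
Set Implicit Arguments. Unset Strict Implicit. Unset Printing Implicit Defensive.

(* Note m + k - 2 >= 0 since m, k >= 1. *)
Definition inC (m k : nat) : Prop :=
  odd k /\ 0 < k /\
  exists s : seq nat,
    [/\ size s = m, sorted ltn s, all (fun j => j <= m + k - 2) s &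
        2 ^ (k + m) - 1 = \sum_(j <- s) 2 ^ j %[mod k]].

(* Main.v *)
Require Import Defs.
From mathcomp Require Import all_boot.
From mathcomp Require cyclic.
From Stdlib Require Import Lia.

Lemma totient_le n : 1 < n -> totient n <= n.-1.
Proof.
move=> n1; rewrite totient_count_coprime.
case: n n1 => [|n] // n1.
rewrite big_nat_recl //.
have -> : coprime n.+1 0 = false by rewrite /coprime gcdn0; case: n n1.
change (\sum_(0 <= i < n) coprime n.+1 i.+1 <= n).
apply: (@leq_trans (\sum_(0 <= i < n) 1)).
  by apply: leq_sum => i _; apply: leq_b1.
by rewrite /index_iota subn0 sum1_size size_iota.
Qed.

Definition bit x i := odd (x %/ 2 ^ i).

Lemma geom n : \sum_(0 <= i < n) 2 ^ i = (2 ^ n).-1.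
Proof.
elim: n => [|n IH]; first by rewrite big_geq.
rewrite big_nat_recr //= IH expnS.
have := expn_gt0 2 n; case: (2 ^ n) => // m _.
rewrite mul2n -addnn addSn. done.
Qed.

Lemma bit_sum n x : x < 2 ^ n -> \sum_(0 <= i < n) bit x i * 2 ^ i = x.
Proof.
elim: n x => [|n IH] x hx.
  by rewrite big_geq //; move: hx; rewrite expn0 ltnS leqn0 => /eqP.
rewrite big_nat_recl //.
have -> : \sum_(0 <= i < n) bit x i.+1 * 2 ^ i.+1 =
          (\sum_(0 <= i < n) bit (x./2) i * 2 ^ i) * 2.
  rewrite big_distrl /=; apply: eq_bigr => i _.
  by rewrite /bit expnS divnMA divn2 (mulnC 2) mulnA.
rewrite (IH x./2); last by rewrite -divn2 ltn_divLR // -expnSr.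
by rewrite /bit expn0 divn1 muln1 muln2 odd_double_half.
Qed.

Lemma cbit_sum n x : x < 2 ^ n ->
  \sum_(0 <= i < n) (~~ bit x i) * 2 ^ i = (2 ^ n).-1 - x.
Proof.
move=> hx; have hB := @bit_sum n x hx.
have e : \sum_(0 <= i < n) 2 ^ i =
   \sum_(0 <= i < n) (~~ bit x i) * 2 ^ i + \sum_(0 <= i < n) bit x i * 2 ^ i.
  by rewrite -big_split /=; apply: eq_bigr => i _; case: (bit x i); rewrite /= ?mul0n ?mul1n ?add0n ?addn0.
by rewrite -geom e hB addnK.
Qed.

Lemma split_sum u P x y (F : nat -> nat) : u <= P ->
  \sum_(0 <= i < P + u)
     (if (if i < u then ~~ bit x i else (P <= i) && bit y (i - P)) then F i else 0)
  = \sum_(0 <= i < u) (if ~~ bit x i then F i else 0)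
    + \sum_(0 <= i < u) (if bit y i then F (i + P) else 0).
Proof.
move=> uP.
rewrite (@big_cat_nat _ _ _ u) //=; last by apply: leq_trans uP (leq_addr _ _).
congr (_ + _).
  by apply: eq_big_nat => i /andP[_ ->].
rewrite (@big_cat_nat _ _ _ P) //=; last by apply: leq_addr.
rewrite big1_seq ?add0n; last first.
  move=> i /andP[_]; rewrite mem_index_iota => /andP[ui iP].
  by rewrite ltnNge ui /= leqNgt iP.
rewrite -{1}(add0n P) big_addn addKn.
apply: eq_big_nat => i /andP[_ iu].
by rewrite ltnNge (leq_trans uP (leq_addl _ _)) /= leq_addl /= addnK.
Qed.

Lemma construct k u P x y :
  2 ^ P = 1 %[mod k] -> u <= P -> x < 2 ^ u -> y < 2 ^ u ->
  \sum_(0 <= i < u) bit x i = \sum_(0 <= i < u) bit y i ->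
  exists s : seq nat, [/\ size s = u, sorted ltn s,
     all (fun j => j <= P + u - 1) s &
     \sum_(j <- s) 2 ^ j = (2 ^ u).-1 - x + y %[mod k]].
Proof.
move=> hP uP hx hy hc.
pose f i := if i < u then ~~ bit x i else (P <= i) && bit y (i - P).
exists [seq i <- index_iota 0 (P + u) | f i]; split.
- rewrite -sum1_size big_filter big_mkcond /= split_sum //.
  have -> : \sum_(0 <= i < u) (if bit y i then 1 else 0) =
            \sum_(0 <= i < u) bit x i.
    by rewrite hc; apply: eq_bigr => i _; case: (bit y i).
  rewrite -big_split /=.
  rewrite (eq_bigr (fun _ => 1)); last by move=> i _; case: (bit x i).
  by rewrite /index_iota subn0 sum1_size size_iota.
- by apply: sorted_filter; [apply: ltn_trans | apply: iota_ltn_sorted].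
- apply/allP => j; rewrite mem_filter mem_index_iota => /andP[_ /andP[_ hj]].
  by rewrite -ltnS subn1 prednK // (leq_ltn_trans _ hj).
- rewrite big_filter big_mkcond /= split_sum //.
  have -> : \sum_(0 <= i < u) (if ~~ bit x i then 2 ^ i else 0) =
            \sum_(0 <= i < u) (~~ bit x i) * 2 ^ i.
    by apply: eq_bigr => i _; case: (bit x i); rewrite /= ?mul1n ?mul0n.
  have -> : \sum_(0 <= i < u) (if bit y i then 2 ^ (i + P) else 0) =
            (\sum_(0 <= i < u) bit y i * 2 ^ i) * 2 ^ P.
    rewrite big_distrl /=; apply: eq_bigr => i _.
    by case: (bit y i); rewrite /= ?mul1n ?mul0n // expnD.
  rewrite cbit_sum // bit_sum //.
  by rewrite -modnDmr -modnMmr hP modnMmr muln1 modnDmr.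
Qed.

Ltac nlia := repeat match goal with
 | H : is_true (_ <= _) |- _ => move/leP: H => H
 end; try (match goal with |- is_true (_ <= _) => apply/leP end);
 unfold addn, subn, muln in * ; lia.

Lemma pop2 w d : d < 2 ^ w ->
  \sum_(0 <= i < w.+1) bit (d * 2) i = \sum_(0 <= i < w.+1) bit d i.
Proof.
move=> hd; rewrite big_nat_recl // big_nat_recr //=.
have -> : bit (d * 2) 0 = false by rewrite /bit expn0 divn1 muln2 odd_double.
have -> : bit d w = false by rewrite /bit divn_small.
rewrite add0n addn0; apply: eq_bigr => i _.
by rewrite /bit expnS [2 * _]mulnC divnMr.
Qed.

Lemma part2 k : odd k -> 3 <= k -> inC (up_log 2 k) k.
Proof.
move=> ok k3.
have k1 : 1 < k by apply: leq_trans k3.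
have [lo hi] : 2 ^ (up_log 2 k).-1 < k /\ k <= 2 ^ up_log 2 k.
  by have /andP[] := up_log_bounds (isT : 1 < 2) k1.
have u0 : 0 < up_log 2 k by rewrite up_log_gt0.
move: lo hi; rewrite -(prednK u0); set w := (up_log 2 k).-1 => lo hi.
set P := totient k.
have hP : 2 ^ P = 1 %[mod k].
  by apply: cyclic.Euler_exp_totient; rewrite coprime2n.
have Pk : P <= k.-1 by apply: totient_le.
have P0 : 0 < P by rewrite totient_gt0; apply: ltnW.
have uP : w.+1 <= P.
  have : k %| 2 ^ P - 1.
    by rewrite -eqn_mod_dvd ?expn_gt0 // hP.
  move/dvdn_leq; rewrite subn_gt0 -{1}(expn0 2) ltn_exp2l // => /(_ P0) kle.
  rewrite -(ltn_exp2l _ _ (isT : 1 < 2)).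
  have : 2 ^ w < 2 ^ P - 1 by apply: leq_trans lo kle.
  by move=> h; apply: leq_trans h (leq_subr _ _).
set A := 2 ^ w.
have A0 : 0 < A by rewrite expn_gt0.
have hu : 2 ^ w.+1 = A + A by rewrite expnS mul2n addnn.
rewrite hu in hi.
have hk : k < A + A.
  rewrite ltn_neqAle hi andbT; apply/negP => /eqP e.
  by move: ok; rewrite e addnn odd_double.
set t := 2 ^ (k + w.+1) - 1.
set r := (t + k.-1 * A) %% k.
have rk : r < k by rewrite ltn_mod; apply: ltnW.
have hV : A + r = t %[mod k].
  rewrite /r modnDmr addnCA -mulSn prednK; last by apply: ltnW.
  by rewrite addnC mulnC modnMDl.
have key : exists x y, [/\ x < 2 ^ w.+1, y < 2 ^ w.+1,
   \sum_(0 <= i < w.+1) bit x i = \sum_(0 <= i < w.+1) bit y i &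
   (2 ^ w.+1).-1 - x + y = A + r].
  rewrite hu.
  case: (leqP ((A + A).-1) (A + r)) => hc.
  - set d := A + r - (A + A).-1.
    have dA : d < A by rewrite /d; nlia.
    exists d, (d * 2); split.
    + nlia.
    + nlia.
    + by rewrite pop2.
    + rewrite /d; nlia.
  - set e := (A + A).-1 - (A + r).
    have eA : e < A by rewrite /e; nlia.
    exists (e * 2), e; split.
    + nlia.
    + nlia.
    + by rewrite pop2.
    + rewrite /e; nlia.
have [x [y [hx hy hc he]]] := key.
have [s [s1 s2 s3 s4]] := @construct k w.+1 P x y hP uP hx hy hc.
split => //; split; first by apply: ltnW.
exists s; split => //.
- apply: sub_all s3 => j /= hj; apply: leq_trans hj _; nlia.
- by rewrite s4 he hV.
Qed.

Lemma part1 m k : 0 < m -> inC m k -> inC m.+1 k.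
Proof.
move=> m0 [ok [k0 [s [s1 s2 s3 s4]]]].
split => //; split => //.
exists (0 :: map succn s); split.
- by rewrite /= size_map s1.
- rewrite /= path_min_sorted.
  + by rewrite sorted_map; apply: sub_sorted s2 => a b.
  + by apply/allP => j /mapP [i _ ->].
- rewrite /=; apply/allP => j /mapP [i hi ->].
  have h : i <= m + k - 2 := allP s3 i hi. nlia.
- rewrite big_cons big_map.
  have -> : \sum_(j <- s) 2 ^ j.+1 = 2 * \sum_(j <- s) 2 ^ j.
    by rewrite big_distrr; apply: eq_bigr => i _; rewrite expnS.
  have e : 2 ^ (k + m.+1) - 1 = 1 + 2 * (2 ^ (k + m) - 1).
    have h : 0 < 2 ^ (k + m) by rewrite expn_gt0.
    rewrite addnS expnS; nlia.
  by rewrite e expn0 -modnDmr -modnMmr s4 modnMmr modnDmr.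
Qed.

Theorem mainTheorem4 :
  (forall m k : nat, 0 < m -> inC m k -> inC m.+1 k) /\
  (forall k : nat, odd k -> 3 <= k -> inC (up_log 2 k) k) /\
  (forall k : nat, (odd k /\ 0 < k) <-> (exists m : nat, 0 < m /\ inC m k)).
Proof.
split; first exact: part1.
split; first exact: part2.
move=> k; split; last by move=> [m [_ [ok [k0 _]]]].
move=> [ok k0].
case: (leqP 3 k) => k3.
  exists (up_log 2 k); split; last exact: part2.
  by rewrite up_log_gt0 /=; apply: leq_trans k3.
have k1 : k = 1.
  case: k ok k0 k3 => [|[|[|k]]] //.
exists 1; split => //; rewrite k1; split => //; split => //.
exists [:: 0]; split => //.
by rewrite !modn1.
Qed.
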